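(* Let $A\in\mathbb{C}^{n\times n}$ with $k=\mathrm{Ind}(A)$, and let $m\in\mathbb{N}=\{1,2,\dots\}$. Then: (a) $A^{\#_m}=0$ if and only if $A^k=0$; (b) $A^{\#_m}=A$ if and only if $A$ is an EP tripotent matrix; (c) $A^{\#_m}=A^*$ if and only if $A$ is an EP partial isometry; (d) $A^{\#_m}=P_A$ if and only if $A$ is idempotent.
   Context: For $A\in\mathbb{C}^{n\times n}$: $A^*$ conjugate transpose, $A^\dagger$ Moore–Penrose inverse, $P_A=AA^\dagger$, $\mathcal{R}(\cdot)$ column space, $A^0=I_n$. $A$ is EP if $\mathcal{R}(A)=\mathcal{R}(A^* )$; tripotent if $A^3=A$; a partial isometry if $AA^*A=A$. The index $\mathrm{Ind}(A)$ is the smallest nonnegative integer $k$ with $\mathcal{R}(A^k)=\mathcal{R}(A^{k+1})$. The core-EP inverse $A^{\mathrm{cEP}}$ is the unique $X$ with $XAX=X$ and $\mathcal{R}(X)=\mathcal{R}(X^* )=\mathcal{R}(A^k)$. For $m\in\mathbb{N}$, the $m$-weak group inverse is $A^{\mathrm{WG}_m}:=(A^{\mathrm{cEP}})^{m+1}A^m$ and the $m$-weak core inverse is $A^{\#_m}:=A^{\mathrm{WG}_m}P_{A^m}$. *)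

(* Defs.v *)
(* Complex matrices are modelled over an arbitrary
   numClosedFieldType C (e.g. the complex numbers), with the conjugation Num.conj. *)
From HB Require Import structures.
From mathcomp Require Import all_boot all_order all_algebra.
From Stdlib Require Import ClassicalEpsilon.
Set Implicit Arguments. Unset Strict Implicit. Unset Printing Implicit Defensive.
Import Order.TTheory GRing.Theory Num.Theory.
Local Open Scope ring_scope.

Section Defs.
Variable C : numClosedFieldType.

Definition ctrmx (m n : nat) (A : 'M[C]_(m, n)) : 'M[C]_(n, m) :=
  map_mx Num.conj (A^T).

Definition colspace_eq (m n p : nat) (A : 'M[C]_(m, n)) (B : 'M[C]_(m, p)) : bool :=
  (A^T == B^T)%MS.

Definition is_mpinv (m n : nat) (A : 'M[C]_(m, n)) (X : 'M[C]_(n, m)) : Prop :=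
  [/\ A *m X *m A = A, X *m A *m X = X,
      ctrmx (A *m X) = A *m X & ctrmx (X *m A) = X *m A].

Definition mpinv (m n : nat) (A : 'M[C]_(m, n)) : 'M[C]_(n, m) :=
  epsilon (inhabits 0) (is_mpinv A).

Definition projP (m n : nat) (A : 'M[C]_(m, n)) : 'M[C]_m := A *m mpinv A.

Definition index_prop (n : nat) (A : 'M[C]_n) (k : nat) : bool :=
  colspace_eq (A ^+ k) (A ^+ k.+1).

Definition mxindex (n : nat) (A : 'M[C]_n) : nat :=
  match excluded_middle_informative (exists k, index_prop A k) with
  | left h => ex_minn h
  | right _ => 0%N
  end.

Definition is_EP (n : nat) (A : 'M[C]_n) : Prop := colspace_eq A (ctrmx A).
Definition tripotent (n : nat) (A : 'M[C]_n) : Prop := A ^+ 3 = A.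
Definition partial_isometry (n : nat) (A : 'M[C]_n) : Prop := A *m ctrmx A *m A = A.
Definition idempotent_mx (n : nat) (A : 'M[C]_n) : Prop := A *m A = A.

Definition is_coreEP (n : nat) (A X : 'M[C]_n) : Prop :=
  [/\ X *m A *m X = X,
      colspace_eq X (A ^+ mxindex A) &
      colspace_eq (ctrmx X) (A ^+ mxindex A)].

Definition coreEP (n : nat) (A : 'M[C]_n) : 'M[C]_n :=
  epsilon (inhabits 0) (is_coreEP A).

Definition mWG (n : nat) (A : 'M[C]_n) (m : nat) : 'M[C]_n :=
  coreEP A ^+ m.+1 *m A ^+ m.

Definition mWC (n : nat) (A : 'M[C]_n) (m : nat) : 'M[C]_n :=
  mWG A m *m projP (A ^+ m).

End Defs.

(* Main.v *)
Require Import Defs.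
From HB Require Import structures.
From mathcomp Require Import all_boot all_order all_algebra.
From Stdlib Require Import ClassicalEpsilon Classical.
Set Implicit Arguments. Unset Strict Implicit. Unset Printing Implicit Defensive.
Import Order.TTheory GRing.Theory Num.Theory.
Local Open Scope ring_scope.

Section Basics.
Variable C : numClosedFieldType.

Lemma ctrmxM (p q r : nat) (A : 'M[C]_(p, q)) (B : 'M[C]_(q, r)) :
  ctrmx (A *m B) = ctrmx B *m ctrmx A.
Proof. by rewrite /ctrmx trmx_mul map_mxM. Qed.

Lemma ctrmxK (p q : nat) (A : 'M[C]_(p, q)) : ctrmx (ctrmx A) = A.
Proof. by apply/matrixP => i j; rewrite /ctrmx !mxE conjCK. Qed.

Lemma ctrmx_eq0 (p q : nat) (M : 'M[C]_(p, q)) : ctrmx M *m M = 0 -> M = 0.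
Proof.
move=> h; apply/matrixP => i j; rewrite mxE.
have := congr1 (fun N : 'M[C]_q => N j j) h; rewrite !mxE => hs.
have H : forall i0 : 'I_p, true -> 0 <= (ctrmx M) j i0 * M i0 j.
  by move=> i0 _; rewrite /ctrmx !mxE -normCKC exprn_ge0.
have := psumr_eq0P H hs (i := i) isT.
rewrite /ctrmx !mxE -normCKC => /eqP; rewrite sqrf_eq0 normr_eq0 => /eqP //.
Qed.

Lemma cancel_l (p q r : nat) (A : 'M[C]_(p, q)) (Y Z : 'M[C]_(q, r)) :
  ctrmx A *m A *m Y = ctrmx A *m A *m Z -> A *m Y = A *m Z.
Proof.
move=> h; apply/eqP; rewrite -subr_eq0; apply/eqP.
rewrite -mulmxBr; apply: ctrmx_eq0.
rewrite ctrmxM -!mulmxA (mulmxA (ctrmx A)) mulmxBr h subrr.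
by rewrite mulmx0.
Qed.

Lemma ctrmx_inj (p q : nat) (A B : 'M[C]_(p, q)) : ctrmx A = ctrmx B -> A = B.
Proof. by move=> h; rewrite -(ctrmxK A) h ctrmxK. Qed.

Lemma cancel_r (p q r : nat) (A : 'M[C]_(q, p)) (Y Z : 'M[C]_(r, q)) :
  Y *m A *m ctrmx A = Z *m A *m ctrmx A -> Y *m A = Z *m A.
Proof.
move=> h; apply: ctrmx_inj; rewrite !ctrmxM.
apply: (@cancel_l _ _ _ (ctrmx A)); rewrite ctrmxK.
by have := congr1 (@ctrmx _ _ _) h; rewrite !ctrmxM ctrmxK !mulmxA.
Qed.


Lemma herm_l (p q : nat) (E : 'M[C]_p) (K : 'M[C]_(p, q)) (Y : 'M[C]_(p, q)) :
  E = Y *m ctrmx K -> E *m K = K -> ctrmx E = E.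
Proof.
move=> hE hK.
have h1 : E *m ctrmx E = E by rewrite {1}hE -mulmxA -ctrmxM hK.
by rewrite -h1 ctrmxM ctrmxK.
Qed.

Lemma herm_r (p q : nat) (E : 'M[C]_p) (K : 'M[C]_(q, p)) (Y : 'M[C]_(q, p)) :
  E = ctrmx K *m Y -> K *m E = K -> ctrmx E = E.
Proof.
move=> hE hK.
have h1 : ctrmx E *m E = E by rewrite {2}hE mulmxA -ctrmxM hK.
by rewrite -h1 ctrmxM ctrmxK.
Qed.

Lemma assoc3 (a b c d e f : nat) (X : 'M[C]_(a, b)) (P : 'M[C]_(b, c))
  (Q : 'M[C]_(c, d)) (R : 'M[C]_(d, e)) (S : 'M[C]_(b, e)) :
  P *m Q *m R = S -> X *m P *m Q *m R = X *m S.
Proof. by move=> h; rewrite -h !mulmxA. Qed.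

Lemma assoc2 (a b c d : nat) (X : 'M[C]_(a, b)) (P : 'M[C]_(b, c))
  (Q : 'M[C]_(c, d)) (S : 'M[C]_(b, d)) :
  P *m Q = S -> X *m P *m Q = X *m S.
Proof. by move=> h; rewrite -h !mulmxA. Qed.

Arguments assoc3 {a b c d e f X P Q R S}.
Arguments assoc2 {a b c d X P Q S}.

Lemma mpinv_exists (p q : nat) (A : 'M[C]_(p, q)) : exists X, is_mpinv A X.
Proof.
pose T := ctrmx A *m A *m ctrmx A.
pose Y := pinvmx T.
have hT : T *m Y *m T = T by apply: mulmxKpV; exact: submx_refl.
pose G := ctrmx A *m Y *m ctrmx A.
have hAGA : A *m G *m A = A.
  have h1 : A *m (ctrmx A *m Y *m ctrmx A *m A *m ctrmx A) = A *m ctrmx A.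
    by apply: cancel_l; move: hT; rewrite /T !mulmxA.
  have h2 : (A *m G) *m A *m ctrmx A = 1%:M *m A *m ctrmx A.
    by rewrite mul1mx -h1 /G !mulmxA.
  by have := cancel_r h2; rewrite mul1mx.
have hAG : ctrmx (A *m G) = A *m G.
  apply: (@herm_l _ _ _ A (A *m ctrmx A *m Y)); first by rewrite /G !mulmxA.
  exact: hAGA.
have hGA : ctrmx (G *m A) = G *m A.
  apply: (@herm_r _ _ _ A (Y *m ctrmx A *m A)); first by rewrite /G !mulmxA.
  by rewrite mulmxA.
clearbody G.
exists (G *m A *m G); split.
- by rewrite !mulmxA hAGA hAGA.
- by rewrite !mulmxA !(assoc3 hAGA).
- by rewrite !mulmxA hAGA.
- by rewrite -!mulmxA (mulmxA A G A) hAGA.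
Qed.

Lemma mpinvP (p q : nat) (A : 'M[C]_(p, q)) : is_mpinv A (mpinv A).
Proof. exact: epsilon_spec (mpinv_exists A). Qed.


Lemma colsubP (p q r : nat) (A : 'M[C]_(p, q)) (B : 'M[C]_(p, r)) :
  (A^T <= B^T)%MS -> exists D, A = B *m D.
Proof.
by move=> /submxP [D hD]; exists D^T; rewrite -[A]trmxK hD trmx_mul trmxK.
Qed.

Lemma colsubW (p q r : nat) (A : 'M[C]_(p, q)) (B : 'M[C]_(p, r)) D :
  A = B *m D -> (A^T <= B^T)%MS.
Proof. by move=> ->; rewrite trmx_mul submxMl. Qed.

Lemma colspace_eqP (p q r : nat) (A : 'M[C]_(p, q)) (B : 'M[C]_(p, r)) :
  colspace_eq A B <-> (exists D, A = B *m D) /\ (exists D, B = A *m D).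
Proof.
split.
  by case/andP => h1 h2; split; apply: colsubP.
by case=> [[D1 h1] [D2 h2]]; apply/andP; split; [apply: (colsubW h1) | apply: (colsubW h2)].
Qed.

Lemma mxpowS n (A : 'M[C]_n) j : A ^+ j.+1 = A *m A ^+ j.
Proof. by rewrite exprS mulmxE. Qed.
Lemma mxpowSr n (A : 'M[C]_n) j : A ^+ j.+1 = A ^+ j *m A.
Proof. by rewrite exprSr mulmxE. Qed.
Lemma mxpowD n (A : 'M[C]_n) i j : A ^+ (i + j) = A ^+ i *m A ^+ j.
Proof. by rewrite exprD mulmxE. Qed.
Lemma mxpow1 n (A : 'M[C]_n) : A ^+ 1 = A.
Proof. by rewrite expr1. Qed.
Lemma mxpow2 n (A : 'M[C]_n) : A ^+ 2 = A *m A.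
Proof. by rewrite expr2 mulmxE. Qed.
Lemma mxpow0 n (A : 'M[C]_n) : A ^+ 0 = 1%:M.
Proof. by rewrite expr0 idmxE. Qed.

Lemma index_exists n (A : 'M[C]_n) : exists k, index_prop A k.
Proof.
apply: NNPP => hn.
have hall : forall j, ~~ index_prop A j.
  by move=> j; apply/negP => hj; apply: hn; exists j.
have hr : forall j, (\rank (A ^+ j)^T + j <= n)%N.
  elim=> [|j IH]; first by rewrite mxpow0 trmx1 mxrank1 addn0.
  have hs : ((A ^+ j.+1)^T <= (A ^+ j)^T)%MS by rewrite mxpowSr trmx_mul; apply: submxMl.
  have := ltn_leqif (mxrank_leqif_eq hs).
  have -> : ((A ^+ j.+1)^T == (A ^+ j)^T)%MS = index_prop A j.
    by rewrite /index_prop /colspace_eq andbC.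
  rewrite (negbTE (hall j)) /= => hlt.
  by rewrite addnS; apply: leq_trans IH; rewrite ltn_add2r.
by have := hr n.+1; rewrite addnS ltnNge leq_addl.
Qed.

Lemma mxindexP n (A : 'M[C]_n) : index_prop A (mxindex A).
Proof.
rewrite /mxindex; case: excluded_middle_informative => [h|h].
  by case: ex_minnP.
by exfalso; apply: h; apply: index_exists.
Qed.

Lemma mxindex_min n (A : 'M[C]_n) j : index_prop A j -> (mxindex A <= j)%N.
Proof.
move=> hj; rewrite /mxindex; case: excluded_middle_informative => [h|h].
  by case: ex_minnP => k _ hk; apply: hk.
by exfalso; apply: h; exists j.
Qed.


Lemma coreEP_core n (K A B Bd W Z : 'M[C]_n) :
  A *m K = B -> K *m A = B -> K = B *m W -> K = Z *m B -> is_mpinv B Bd ->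
  [/\ K *m Bd *m A *m (K *m Bd) = K *m Bd,
      K = K *m Bd *m B,
      ctrmx (K *m Bd) = K *m ctrmx (K *m Bd *m ctrmx Bd *m ctrmx A)
    & K = ctrmx (K *m Bd) *m (ctrmx A *m K)].
Proof.
move=> AK KA KW KZ [P1 P2 P3 P4]; split.
- by rewrite !mulmxA (assoc2 AK) (assoc3 P2).
- by rewrite [in RHS]KZ (assoc3 P1).
- apply: ctrmx_inj; rewrite ctrmxK ctrmxM ctrmxK.
  rewrite -!mulmxA -(ctrmxM K A) KA -ctrmxM P3.
  by rewrite !mulmxA (assoc3 P2).
  rewrite ctrmxM !mulmxA -(mulmxA (ctrmx Bd)) -(ctrmxM A K) AK -ctrmxM P3.
  by rewrite [in RHS]KW !mulmxA P1 -KW.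
Qed.

Lemma coreEP_exists n (A : 'M[C]_n) : exists X, is_coreEP A X.
Proof.
set K := A ^+ mxindex A; set B := A ^+ (mxindex A).+1.
have AK : A *m K = B by rewrite /B mxpowS.
have KA : K *m A = B by rewrite /B mxpowSr.
have [[W KW] [W' BW']] := (colspace_eqP _ _).1 (mxindexP A).
have hBK : (B <= K)%MS by rewrite -AK; apply: submxMl.
have hKB : (\rank K <= \rank B)%N.
  rewrite -(mxrank_tr K) -(mxrank_tr B); apply: mxrankS; exact: (colsubW KW).
have := eq_leqif (mxrank_leqif_eq hBK).
rewrite eqn_leq hKB mxrankS //= => /esym /andP [_ /submxP [Z KZ]].
have [P1 P2 P3 P4] := coreEP_core AK KA KW KZ (mpinvP B).
exists (K *m mpinv B); split => //.
- by apply/colspace_eqP; split; [exists (mpinv B) | exists B].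
- by apply/colspace_eqP; split; [exists (ctrmx (K *m mpinv B *m ctrmx (mpinv B) *m ctrmx A)) | exists (ctrmx A *m K)].
Qed.

Lemma coreEPP n (A : 'M[C]_n) : is_coreEP A (coreEP A).
Proof. exact: epsilon_spec (coreEP_exists A). Qed.


Definition isproj n p (E : 'M[C]_n) (K : 'M[C]_(n, p)) :=
  [/\ ctrmx E = E, E *m K = K & exists Z, E = K *m Z].

Lemma isproj_uniq n p (E F : 'M[C]_n) (K : 'M[C]_(n, p)) :
  isproj E K -> isproj F K -> E = F.
Proof.
move=> [hE EK [Z EZ]] [hF FK [Z' FZ]].
have FE : F *m E = E by rewrite {2}EZ {1}EZ mulmxA FK.
have EF : E *m F = F by rewrite {2}FZ {1}FZ mulmxA EK.
by rewrite -hE -FE ctrmxM hE hF EF.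
Qed.

Lemma isproj_range n p q (E : 'M[C]_n) (K : 'M[C]_(n, p)) (L : 'M[C]_(n, q)) U V :
  isproj E K -> K = L *m U -> L = K *m V -> isproj E L.
Proof.
move=> [hE EK [Z EZ]] KU LV; split => //.
  by rewrite LV mulmxA EK.
by exists (U *m Z); rewrite mulmxA -KU.
Qed.

Lemma projP_isproj n p (M : 'M[C]_(n, p)) : isproj (projP M) M.
Proof.
have [P1 P2 P3 P4] := mpinvP M.
split; [exact: P3 | exact: P1 | by exists (mpinv M)].
Qed.

Lemma K_pow n (A W : 'M[C]_n) k :
  A ^+ k = A ^+ k.+1 *m W -> forall j, A ^+ k = A ^+ (k + j) *m W ^+ j.
Proof.
move=> h; elim=> [|j IH]; first by rewrite addn0 mxpow0 mulmx1.
have -> : (k + j.+1 = j + k.+1)%N by rewrite !addnS addnC.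
rewrite mxpowD (mxpowS W) mulmxA -(mulmxA (A ^+ j)) -h -mxpowD addnC.
exact: IH.
Qed.

Lemma XA_pow n (A X W V : 'M[C]_n) k :
  X *m A *m X = X -> A ^+ k = X *m V -> A ^+ k = A ^+ k.+1 *m W ->
  forall l, (k <= l)%N -> X *m A ^+ l.+1 = A ^+ l.
Proof.
move=> hX KV KW l /subnKC <-.
have h1 : X *m A ^+ k.+1 = A ^+ k by rewrite mxpowS mulmxA {1}KV mulmxA hX -KV.
by rewrite -addSn !mxpowD mulmxA h1.
Qed.

Lemma XjA_pow n (A X : 'M[C]_n) k :
  (forall l, (k <= l)%N -> X *m A ^+ l.+1 = A ^+ l) ->
  forall j i, (k <= i)%N -> X ^+ j *m A ^+ (j + i) = A ^+ i.
Proof.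
move=> h; elim=> [|j IH] i hi; first by rewrite mxpow0 mul1mx add0n.
rewrite mxpowSr -mulmxA addSn h; first exact: IH.
by apply: leq_trans hi (leq_addl _ _).
Qed.


Lemma colspace_eq_tr p q r s (X : 'M[C]_(p, q)) (Y : 'M[C]_(p, r)) (K : 'M[C]_(p, s)) :
  colspace_eq X K -> colspace_eq Y K -> colspace_eq X Y.
Proof.
move=> /andP [a b] /andP [c d]; apply/andP; split.
  exact: submx_trans a d.
exact: submx_trans c b.
Qed.

Lemma mp_AAs p q (A : 'M[C]_(p, q)) : A = A *m ctrmx A *m ctrmx (mpinv A).
Proof.
have [P1 P2 P3 P4] := mpinvP A.
by rewrite -mulmxA -ctrmxM P4 mulmxA P1.
Qed.

End Basics.
Arguments assoc3 {C a b c d e f X P Q R S}.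
Arguments assoc2 {C a b c d X P Q S}.

Theorem theorem7p2 (C : numClosedFieldType) (n : nat) (A : 'M[C]_n) (m : nat)
  (hm : (0 < m)%N) :
  let k := mxindex A in
  [/\ mWC A m = 0 <-> A ^+ k = 0,
      mWC A m = A <-> is_EP A /\ tripotent A,
      mWC A m = ctrmx A <-> is_EP A /\ partial_isometry A
    & mWC A m = projP A <-> idempotent_mx A].
Proof.
move=> k; have kE : mxindex A = k by [].
clearbody k.
have [hXAX hXK hXsK] := coreEPP A.
have idx := mxindexP A.
rewrite /index_prop kE in idx.
rewrite kE in hXK hXsK.
have -> : mWC A m = coreEP A ^+ m.+1 *m A ^+ m *m projP (A ^+ m) by [].
move: (coreEP A) hXAX hXK hXsK => X hXAX hXK hXsK.
have [[U XU] [V KV]] := (colspace_eqP _ _).1 hXK.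
have [[U' XsU] [V' KsV]] := (colspace_eqP _ _).1 hXsK.
have XU2 : X = ctrmx U' *m ctrmx (A ^+ k) by rewrite -ctrmxM -XsU ctrmxK.
have [[W KW] _] := (colspace_eqP _ _).1 idx.
have hXl := XA_pow hXAX KV KW.
have hXj := XjA_pow hXl.
have hKp := K_pow KW.
have hAXK : isproj (A *m X) (A ^+ k).
  split.
  - apply: (@herm_l _ _ _ _ (A ^+ k) (A *m ctrmx U')); first by rewrite {1}XU2 mulmxA.
    rewrite {1}KW mulmxA -(mulmxA A) (hXl k (leqnn k)) -mxpowS -KW //.
  - rewrite {1}KW mulmxA -(mulmxA A) (hXl k (leqnn k)) -mxpowS -KW //.
  - by exists (A *m U); rewrite {1}XU mulmxA -mxpowS mxpowSr mulmxA.
have G1 : exists Y, X ^+ m.+1 *m A ^+ m *m projP (A ^+ m) = A ^+ k *m Y.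
  exists (U *m X ^+ m *m A ^+ m *m projP (A ^+ m)).
  by rewrite (mxpowS X) {1}XU !mulmxA.
have hk1 : (exists Y, A = A ^+ 2 *m Y) -> (k <= 1)%N.
  case=> Y hY; rewrite -kE; apply: mxindex_min.
  apply/colspace_eqP; split; first by exists Y; rewrite mxpow1.
  by exists A; rewrite mxpow1 mxpowS mxpow1.
have hk2 : forall Y, A = A ^+ k *m Y -> (k <= 1)%N.
  move=> Y hY; rewrite leqNgt; apply/negP => hk.
  have : (k <= 1)%N.
    by apply: hk1; exists (A ^+ (k - 2) *m Y); rewrite mulmxA -mxpowD subnKC.
  by rewrite leqNgt hk.
have R : (k <= 1)%N -> [/\ A *m X = projP A, projP (A ^+ m) = projP A,
    X *m A ^+ 2 = A & X ^+ m.+1 *m A ^+ m *m projP (A ^+ m) = X].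
  move=> hk.
  have [[U1 AU1] [V1 KV1]] :
      (exists U1, A = A ^+ k *m U1) /\ (exists V1, A ^+ k = A *m V1).
    have [k0|k1] : k = 0%N \/ k = 1%N by case: (k) hk => [|[|]]; auto.
    - split; first by exists A; rewrite k0 mxpow0 mul1mx.
      by exists W; rewrite k0 in KW; rewrite k0 KW mxpow1.
    - by split; [exists 1%:M | exists 1%:M]; rewrite k1 mxpow1 mulmx1.
  have R2 : A *m X = projP A.
    exact: isproj_uniq (isproj_range hAXK KV1 AU1) (projP_isproj A).
  have hkm : (k <= m)%N by apply: leq_trans hk hm.
  have R3 : projP (A ^+ m) = projP A.
    apply: isproj_uniq (projP_isproj A).
    apply: (isproj_range (projP_isproj (A ^+ m)) (U := A ^+ m.-1) (V := W ^+ (m - k)%N *m U1)).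
      by rewrite -mxpowS prednK.
    by rewrite {1}AU1 (hKp (m - k)%N) subnKC // mulmxA.
  have R4 : X *m A ^+ 2 = A by rewrite (hXl 1 hk) mxpow1.
  split => //.
  have h := hXj m 1 hk; rewrite addn1 mxpow1 in h.
  rewrite R3 -R2 mulmxA -(mulmxA (X ^+ m.+1)) -mxpowSr (mxpowS X).
  by rewrite -(mulmxA X) h.
have [P1 P2 P3 P4] := mpinvP A.
have PA : projP A *m A = A by rewrite /projP P1.
have P3' : ctrmx (projP A) = projP A by exact: P3.
split.
- split => [h|h].
  + have h2 : X ^+ m.+1 *m A ^+ (m.+1 + (m.-1 + k)) = 0.
      have -> : (m.+1 + (m.-1 + k) = m + m + k)%N.
        by rewrite addnA addSn -addnS prednK.
      have [P1m _ _ _] := mpinvP (A ^+ m).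
      rewrite !mxpowD !mulmxA -{2}P1m !mulmxA.
      rewrite (assoc2 (erefl : A ^+ m *m mpinv (A ^+ m) = projP (A ^+ m))) h.
      by rewrite !mul0mx.
    rewrite hXj in h2; last by apply: leq_addl.
    by rewrite (hKp m.-1) addnC h2 mul0mx.
  + by rewrite (mxpowS X) XU h !mul0mx.
- split => [h|[hEP h3]].
  + have [Y hY] := G1; rewrite h in hY.
    have hk := hk2 _ hY.
    have [_ _ _ R5] := R hk; rewrite R5 in h.
    split; first by rewrite /is_EP -h; exact: colspace_eq_tr hXK hXsK.
    rewrite /tripotent h in hXAX *.
    by rewrite !mxpowS mxpow0 mulmx1 mulmxA.
  + have hk : (k <= 1)%N by apply: hk1; exists A; rewrite -mxpowSr.
    have [R2 _ R4 ->] := R hk.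
    have [_ [D hD]] := (colspace_eqP _ _).1 hEP.
    have h3' : A ^+ 2 *m projP A = projP A.
      by rewrite /projP mulmxA -mxpowSr h3.
    have hPs : projP A *m ctrmx A = ctrmx A by rewrite hD mulmxA PA.
    have hsq : ctrmx A *m ctrmx A = projP A.
      have := congr1 (fun M : 'M[C]_n => ctrmx M) h3'.
      by rewrite /= ctrmxM P3' mxpowS mxpow1 ctrmxM mulmxA hPs.
    have PAA : projP A = A *m A.
      by rewrite -P3' -hsq ctrmxM ctrmxK.
    rewrite -{1}hXAX -mulmxA R2 PAA mulmxA.
    by rewrite -mulmxA -mxpow2.
- split => [h|[hEP hPI]].
  + have [Y hY] := G1; rewrite h in hY.
    have hk : (k <= 1)%N.
      rewrite leqNgt; apply/negP => hk.
      have : (k <= 1)%N.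
        apply: hk1; exists (A ^+ k.-1 *m Y *m ctrmx (mpinv A)).
        rewrite {1}(mp_AAs A) hY !mulmxA -mxpowS.
        by rewrite -(mxpowD A 2 k.-1) addnC addn2 prednK //; apply: ltnW.
      by rewrite leqNgt hk.
    have [_ _ _ R5] := R hk; rewrite R5 in h.
    split.
      rewrite /is_EP -[A in colspace_eq A _]ctrmxK -h.
      exact: colspace_eq_tr hXsK hXK.
    rewrite /partial_isometry; rewrite h in hXAX.
    by have := congr1 (@ctrmx _ _ _) hXAX; rewrite !ctrmxM ctrmxK mulmxA.
  + have [_ [D hD]] := (colspace_eqP _ _).1 hEP.
    have hk : (k <= 1)%N.
      apply: hk1; exists (D *m A).
      by rewrite -{1}hPI hD mxpow2 !mulmxA.
    have [R2 _ R4 ->] := R hk.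
    have hP : A *m ctrmx A = projP A.
      apply: isproj_uniq (projP_isproj A); split => //.
      - by rewrite ctrmxM ctrmxK.
      - by exists (ctrmx A).
    rewrite -{1}hXAX -mulmxA R2 -hP mulmxA {1}hD.
    have -> : X *m A *m (A *m D) = X *m A ^+ 2 *m D by rewrite mxpow2 !mulmxA.
    by rewrite R4 hD.
- split => [h|h].
  + have [Y hY] := G1; rewrite h in hY.
    have hk : (k <= 1)%N.
      by apply: (hk2 (Y *m A)); rewrite -{1}PA hY mulmxA.
    have [R2 _ R4 R5] := R hk; rewrite R5 -R2 in h.
    by rewrite /idempotent_mx -{3}R4 {1}h -mulmxA R4.
  + have h2 : A ^+ 2 = A by rewrite mxpowS mxpow1 h.
    have hk : (k <= 1)%N by apply: hk1; exists 1%:M; rewrite h2 mulmx1.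
    have [R2 _ R4 ->] := R hk.
    rewrite h2 in R4.
    by rewrite -R2 -{1}hXAX R4.
Qed.
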